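(* Let $P$ be a program context and let ${\mathcal{V}}, \mathcal{W}$ be sets of variables such that $P \in \mathcal{E}_{{\mathcal{V}}}$ and $P \in \mathcal{E}_{\mathcal{W}}$ (open evaluation contexts). Then ${\mathcal{V}} = \mathcal{W}$.
   Context: Syntax (split presentation). Terms: $t,u,s ::= x \mid \lambda x.t \mid t\,u$ (ordinary $\lambda$-terms over a countable set of variables). Values: $v,w ::= \lambda x.t$ (variables are not values). Environments: $E ::= \epsilon \mid E[x\leftarrow t]$ (lists of explicit substitutions, ES). Programs: $p ::= (t,E)$. In $E[x\leftarrow t]$ and $(u,E[x\leftarrow t])$ the variable $x$ is bound in $E$ and $u$; everything is up to $\alpha$-renaming, and appended ES are always assumed to bind fresh variables (Barendregt's convention). Appending an ES to a program: $(t,E)@[x\leftarrow u] := (t,E[x\leftarrow u])$. Inert terms and fireballs: $i ::= x \mid i\,f$, $f ::= v \mid i$. Open term evaluation contexts: $\mathcal{H} ::= \langle\cdot\rangle \mid \mathcal{H}\,t \mid i\,\mathcal{H}$ (with $i$ inert). Term contexts in general: $C ::= \langle\cdot\rangle \mid C\,t \mid t\,C$. Environment contexts: $G ::= E[x\leftarrow C] \mid G[x\leftarrow u]$. Program contexts: $P ::= (C,E) \mid (t,G)$. Appending an ES to a program context: $(C,E)@[x\leftarrow u] := (C,E[x\leftarrow u])$, $(t,G)@[x\leftarrow u] := (t,G[x\leftarrow u])$. Plugging a program into a program context: $(C,E)\langle (t,E')\rangle := (C\langle t\rangle, E'E)$; $(u,E[x\leftarrow C])\langle (t,E')\rangle :=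 (u, E[x\leftarrow C\langle t\rangle]E')$; $(u,G[x\leftarrow s])\langle (t,E)\rangle := ((u,G)\langle(t,E)\rangle)@[x\leftarrow s]$. Plugging a term $t$ into $P$ means $P\langle t\rangle := P\langle (t,\epsilon)\rangle$. For a program $p=(t,E)$ and a head context $\mathcal{H}$, $p@[x\leftarrow\mathcal{H}]$ denotes the program context $(t,E[x\leftarrow\mathcal{H}])$. Needed variables: $nv(x)=\{x\}$, $nv(\lambda x.t)=\emptyset$, $nv(t\,u)=nv(t)\cup nv(u)$; $nv((t,\epsilon))=nv(t)$, and $nv((t,E[x\leftarrow u]))=nv((t,E))$ if $x\notin nv((t,E))$, and $=(nv((t,E))\setminus\{x\})\cup nv(u)$ if $x\in nv((t,E))$. For term contexts: $nv(\langle\cdot\rangle)=\emptyset$, $nv(\mathcal{H}\,t)=nv(\mathcal{H})$, $nv(i\,\mathcal{H})=nv(i)\cup nv(\mathcal{H})$. Open evaluation contexts: the relation $P\in\mathcal{E}_{{\mathcal{V}}}$ ($P$ is an open evaluation context with needed variables ${\mathcal{V}}$) is inductively defined by: (ax) $(\mathcal{H},\epsilon)\in\mathcal{E}_{nv(\mathcal{H})}$; (inert) if $P\in\mathcal{E}_{{\mathcal{V}}}$ and $x\in{\mathcal{V}}$ then $P@[x\leftarrow i]\in\mathcal{E}_{({\mathcal{V}}\setminus\{x\})\cup nv(i)}$ for $i$ inert; (gc) if $P\in\mathcal{E}_{{\mathcal{V}}}$ and $x\notin{\mathcal{V}}$ then $P@[x\leftarrow t]\in\mathcal{E}_{{\mathcal{V}}}$;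 (her) if $P\in\mathcal{E}_{{\mathcal{V}}}$ and $x\notin{\mathcal{V}}$ then $P\langle x\rangle@[x\leftarrow\mathcal{H}]\in\mathcal{E}_{{\mathcal{V}}\cup nv(\mathcal{H})}$. In the last three rules $x$ is not in the domain of $P$. *)

(* Defs.v *)
From HB Require Import structures.
From mathcomp Require Import all_boot.
From mathcomp Require Import finmap.

Set Implicit Arguments.
Unset Strict Implicit.
Unset Printing Implicit Defensive.

Local Open Scope fset_scope.

Definition var := nat.

Inductive term : Type :=
| Var : var -> term
| Lam : var -> term -> term
| App : term -> term -> term.

(* Environments  E ::= eps | E[x <- t]  (the rightmost ES is the outermost). *)
Inductive env : Type :=
| Eps : env
| ESub : env -> var -> term -> env.

Definition program : Type := (term * env)%type.

(* Concatenation  E' E  (E' inner, E outer). *)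
Fixpoint env_cat (E' E : env) : env :=
  match E with
  | Eps => E'
  | ESub E0 x u => ESub (env_cat E' E0) x u
  end.

Fixpoint env_dom (E : env) : {fset var} :=
  match E with
  | Eps => fset0
  | ESub E0 x _ => env_dom E0 `|` [fset x]
  end.

Inductive inert : term -> Prop :=
| inert_var : forall x, inert (Var x)
| inert_app : forall i f, inert i -> fireball f -> inert (App i f)
with fireball : term -> Prop :=
| fireball_val : forall x t, fireball (Lam x t)
| fireball_inert : forall i, inert i -> fireball i.

Inductive tctx : Type :=
| Hole : tctx
| CAppL : tctx -> term -> tctx
| CAppR : term -> tctx -> tctx.

Fixpoint tplug (C : tctx) (t : term) : term :=
  match C with
  | Hole => t
  | CAppL C0 u => App (tplug C0 t) u
  | CAppR u C0 => App u (tplug C0 t)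
  end.

Inductive head_ctx : tctx -> Prop :=
| head_hole : head_ctx Hole
| head_appL : forall H t, head_ctx H -> head_ctx (CAppL H t)
| head_appR : forall i H, inert i -> head_ctx H -> head_ctx (CAppR i H).

Fixpoint nv (t : term) : {fset var} :=
  match t with
  | Var x => [fset x]
  | Lam _ _ => fset0
  | App t1 t2 => nv t1 `|` nv t2
  end.

Fixpoint nv_prog_aux (t : term) (E : env) : {fset var} :=
  match E with
  | Eps => nv t
  | ESub E0 x u =>
      let N := nv_prog_aux t E0 in
      if x \in N then (N `\ x) `|` nv u else N
  end.

Definition nv_prog (p : program) : {fset var} := nv_prog_aux p.1 p.2.

Fixpoint nv_ctx (C : tctx) : {fset var} :=
  match C with
  | Hole => fset0
  | CAppL C0 _ => nv_ctx C0
  | CAppR i C0 => nv i `|` nv_ctx C0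
  end.

(* Program contexts  P ::= (C,E) | (t,G)  with  G ::= E[x<-C] | G[x<-u].
   A G is represented as  E[x<-C]E2  by  (E, x, C, E2). *)
Inductive pctx : Type :=
| PTerm : tctx -> env -> pctx
| PEnv : term -> env -> var -> tctx -> env -> pctx.

Definition pctx_app (P : pctx) (x : var) (u : term) : pctx :=
  match P with
  | PTerm C E => PTerm C (ESub E x u)
  | PEnv t E y C E2 => PEnv t E y C (ESub E2 x u)
  end.

Definition pctx_dom (P : pctx) : {fset var} :=
  match P with
  | PTerm _ E => env_dom E
  | PEnv _ E y _ E2 => env_dom E `|` [fset y] `|` env_dom E2
  end.

Definition pplug (P : pctx) (p : program) : program :=
  match P with
  | PTerm C E => (tplug C p.1, env_cat p.2 E)
  | PEnv u E x C E2 => (u, env_cat (env_cat (ESub E x (tplug C p.1)) p.2) E2)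
  end.

Definition pplug_term (P : pctx) (t : term) : program := pplug P (t, Eps).

Definition prog_app_ctx (p : program) (x : var) (H : tctx) : pctx :=
  PEnv p.1 p.2 x H Eps.

(* Open evaluation contexts:  P \in E_V  is  open_ectx P V *)
Inductive open_ectx : pctx -> {fset var} -> Prop :=
| oe_ax : forall H, head_ctx H -> open_ectx (PTerm H Eps) (nv_ctx H)
| oe_inert : forall P V x i,
    open_ectx P V -> x \in V -> x \notin pctx_dom P -> inert i ->
    open_ectx (pctx_app P x i) ((V `\ x) `|` nv i)
| oe_gc : forall P V x t,
    open_ectx P V -> x \notin V -> x \notin pctx_dom P ->
    open_ectx (pctx_app P x t) V
| oe_her : forall P V x H,
    open_ectx P V -> x \notin V -> x \notin pctx_dom P -> head_ctx H ->
    open_ectx (prog_app_ctx (pplug_term P (Var x)) x H) (V `|` nv_ctx H).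

(* Main.v *)
Require Import Defs.
From mathcomp Require Import all_boot finmap.
Local Open Scope fset_scope.

Lemma nv_plug C y : y \in nv (tplug C (Var y)).
Proof. elim: C => [|C IH t|t C IH] /=; rewrite ?in_fsetU ?IH ?orbT //; by rewrite in_fset1. Qed.

Lemma head_plug_inj H1 H2 y1 y2 : head_ctx H1 -> head_ctx H2 ->
  y1 \notin nv_ctx H2 -> y2 \notin nv_ctx H1 ->
  tplug H1 (Var y1) = tplug H2 (Var y2) -> H1 = H2 /\ y1 = y2.
Proof.
move=> h1; elim: h1 H2 => [|H t h IH|i H hi h IH] H2 h2.
- case: h2 => [|H' t' h'|i' H' hi' h'] //= _ _; first by case=> ->.
- case: h2 => [|H' t' h'|i' H' hi' h'] //= n1 n2.
  + case=> e1 e2; have [-> ->] := IH _ h' n1 n2 e1; by rewrite e2.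
  + case=> e1 _; move: n1; rewrite in_fsetU -e1 nv_plug //.
- case: h2 => [|H' t' h'|i' H' hi' h'] //= n1 n2.
  + case=> e1 _; move: n2; rewrite in_fsetU e1 nv_plug //.
  + rewrite !in_fsetU !negb_or in n1 n2; case/andP: n1 => _ n1; case/andP: n2 => _ n2.
    case=> e1 e2; have [-> ->] := IH _ h' n1 n2 e2; by rewrite e1.
Qed.

Lemma pplug_app P z t y : pplug_term (pctx_app P z t) (Var y) =
  ((pplug_term P (Var y)).1, ESub (pplug_term P (Var y)).2 z t).
Proof. by case: P. Qed.

Lemma pplug_her p z C y : pplug_term (prog_app_ctx p z C) (Var y) =
  (p.1, ESub p.2 z (tplug C (Var y))).
Proof. by case: p. Qed.

Lemma env_dom_cat E' E : env_dom (env_cat E' E) = env_dom E' `|` env_dom E.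
Proof. elim: E => [|E IH x u] /=; first by rewrite fsetU0. by rewrite IH fsetUA. Qed.

Lemma dom_plug P y : env_dom (pplug_term P (Var y)).2 = pctx_dom P.
Proof. case: P => [C E|u E x C E2] /=; rewrite !env_dom_cat /= ?fset0U ?fsetU0 //. Qed.

Lemma dom_app P z t : pctx_dom (pctx_app P z t) = pctx_dom P `|` [fset z].
Proof. case: P => [C E|u E x C E2] //=; by rewrite fsetUA. Qed.

Lemma dom_her p z C : pctx_dom (prog_app_ctx p z C) = env_dom p.2 `|` [fset z].
Proof. by case: p => a e /=; rewrite fsetU0. Qed.

Lemma pctx_app_inj P z t P' z' t' : pctx_app P z t = pctx_app P' z' t' ->
  P = P' /\ z = z' /\ t = t'.
Proof. case: P => [??|?????]; case: P' => [??|?????] //= [] *; subst; by split. Qed.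

Lemma app_ne_term P z t H : pctx_app P z t <> PTerm H Eps.
Proof. by case: P. Qed.
Lemma app_ne_her P z t p x H : pctx_app P z t <> prog_app_ctx p x H.
Proof. by case: P. Qed.

Arguments head_plug_inj {H1 H2 y1 y2}.
Ltac bsolve := repeat match goal with
  | |- context [?a \in ?b] => case: (a \in b)
  | |- context [?a == ?b] => case: (a == b) end; done.

Ltac mem := rewrite ?dom_app ?dom_her ?dom_plug ?(in_fsetU, in_fsetD, in_fset1, in_fset0) ?negb_or.

Lemma pair_eta (A B : Type) (p q : A * B) : p.1 = q.1 -> p.2 = q.2 -> p = q.
Proof. by case: p; case: q => ???? /= -> ->. Qed.

Arguments pair_eta {A B p q}.
Lemma plug_inj P1 V1 (h1 : open_ectx P1 V1) : forall P2 V2 y1 y2, open_ectx P2 V2 ->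
  y1 \notin V1 `|` V2 `|` pctx_dom P1 `|` pctx_dom P2 ->
  y2 \notin V1 `|` V2 `|` pctx_dom P1 `|` pctx_dom P2 ->
  pplug_term P1 (Var y1) = pplug_term P2 (Var y2) -> P1 = P2 /\ y1 = y2.
Proof.
induction h1 as [H1 hH1 | P1 V1 z i h1 IH hz hzd hi | P1 V1 z t h1 IH hz hzd
                | P0 V0 z C1 h0 IH hz hzd hC];
 intros P2 V2 y1 y2 h2 n1 n2 heq;
 destruct h2 as [H2 hH2 | P2 V2 z' i' h2 hz' hzd' hi' | P2 V2 z' t' h2 hz' hzd'
                | P0' V0' z' C2 h0' hz' hzd' hC'];
 rewrite ?pplug_app ?pplug_her in heq; try by case: heq.
- case: heq => heq.
  have a1 : y1 \notin nv_ctx H2 by move: n1; mem; bsolve.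
  have a2 : y2 \notin nv_ctx H1 by move: n2; mem; bsolve.
  by have [-> ->] := head_plug_inj hH1 hH2 a1 a2 heq.
- case: heq => e1 e2 e3 e4; subst z' i'.
  have a1 : y1 \notin V1 `|` V2 `|` pctx_dom P1 `|` pctx_dom P2 by move: n1; mem; move: hz hz'; mem; bsolve.
  have a2 : y2 \notin V1 `|` V2 `|` pctx_dom P1 `|` pctx_dom P2 by move: n2; mem; move: hz hz'; mem; bsolve.
  by have [-> ->] := IH _ _ _ _ h2 a1 a2 (pair_eta e1 e2).
- case: heq => e1 e2 e3 e4; subst z' t'.
  have a1 : y1 \notin V1 `|` V2 `|` pctx_dom P1 `|` pctx_dom P2 by move: n1; mem; move: hz hz'; mem; bsolve.
  have a2 : y2 \notin V1 `|` V2 `|` pctx_dom P1 `|` pctx_dom P2 by move: n2; mem; move: hz hz'; mem; bsolve.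
  by have [-> ->] := IH _ _ _ _ h2 a1 a2 (pair_eta e1 e2).
- case: heq => e1 e2 e3 e4.
  by move: n2; mem; rewrite e4 nv_plug; bsolve.
- case: heq => e1 e2 e3 e4; subst z' i'.
  have a1 : y1 \notin V1 `|` V2 `|` pctx_dom P1 `|` pctx_dom P2 by move: n1; mem; move: hz hz'; mem; bsolve.
  have a2 : y2 \notin V1 `|` V2 `|` pctx_dom P1 `|` pctx_dom P2 by move: n2; mem; move: hz hz'; mem; bsolve.
  by have [-> ->] := IH _ _ _ _ h2 a1 a2 (pair_eta e1 e2).
- case: heq => e1 e2 e3 e4; subst z' t'.
  have a1 : y1 \notin V1 `|` V2 `|` pctx_dom P1 `|` pctx_dom P2 by move: n1; mem; move: hz hz'; mem; bsolve.
  have a2 : y2 \notin V1 `|` V2 `|` pctx_dom P1 `|` pctx_dom P2 by move: n2; mem; move: hz hz'; mem; bsolve.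
  by have [-> ->] := IH _ _ _ _ h2 a1 a2 (pair_eta e1 e2).
- case: heq => e1 e2 e3 e4; subst z' t.
  have a1 : y1 \notin V1 `|` V0' `|` pctx_dom P1 `|` pctx_dom P0' by move: n1 hz hzd hz' hzd'; mem; bsolve.
  have a2 : z \notin V1 `|` V0' `|` pctx_dom P1 `|` pctx_dom P0' by move: n1 hz hzd hz' hzd'; mem; bsolve.
  have [_ e] := IH _ _ _ _ h0' a1 a2 (pair_eta e1 e2).
  by move: n1; rewrite e; mem; rewrite eqxx; bsolve.
- case: heq => e1 e2 e3 e4.
  by move: n1; mem; rewrite -e4 nv_plug; bsolve.
- case: heq => e1 e2 e3 e4; subst z' t'.
  have a1 : z \notin V0 `|` V2 `|` pctx_dom P0 `|` pctx_dom P2 by move: n2 hz hzd hz' hzd'; mem; bsolve.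
  have a2 : y2 \notin V0 `|` V2 `|` pctx_dom P0 `|` pctx_dom P2 by move: n2 hz hzd hz' hzd'; mem; bsolve.
  have [_ e] := IH _ _ _ _ h2 a1 a2 (pair_eta e1 e2).
  by move: n2; rewrite -e; mem; rewrite eqxx; bsolve.
- case: heq => e1 e2 e3 e4; subst z'.
  have a1 : y1 \notin nv_ctx C2 by move: n1; mem; bsolve.
  have a2 : y2 \notin nv_ctx C1 by move: n2; mem; bsolve.
  have [-> ->] := head_plug_inj hC hC' a1 a2 e4.
  by rewrite /prog_app_ctx e1 e2.
Qed.

Arguments plug_inj {P1 V1}.
Lemma uniq_aux P V (h : open_ectx P V) : forall P' W, open_ectx P' W -> P = P' -> V = W.
Proof.
induction h as [H1 hH1 | P1 V1 z i h1 IH hz hzd hi | P1 V1 z t h1 IH hz hzd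
                | P0 V0 z C1 h0 IH hz hzd hC];
 intros P2 V2 h2 e;
 destruct h2 as [H2 hH2 | P2 V2 z' i' h2 hz' hzd' hi' | P2 V2 z' t' h2 hz' hzd'
                | P0' V0' z' C2 h0' hz' hzd' hC'];
 try (by destruct P1; unfold prog_app_ctx in e; simpl in e; congruence); try (by destruct P2; unfold prog_app_ctx in e; simpl in e; congruence); try (by unfold prog_app_ctx in e; congruence).
- case/pctx_app_inj: e => e [<- <-]; by rewrite (IH _ _ h2 e).
- case/pctx_app_inj: e => e [ez _]; subst z'; move: hz'; by rewrite -(IH _ _ h2 e) hz.
- case/pctx_app_inj: e => e [ez _]; subst z'; move: hz; by rewrite (IH _ _ h2 e) hz'.
- move/pctx_app_inj: e => [e _]; exact: (IH _ _ h2 e).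
- case: e => e1 e2 e3 e4; subst z' C2.
  have a1 : z \notin V0 `|` V0' `|` pctx_dom P0 `|` pctx_dom P0' by move: hz hz' hzd hzd'; mem; bsolve.
  have [e _] := plug_inj h0 _ _ _ _ h0' a1 a1 (pair_eta e1 e2).
  by rewrite (IH _ _ h0' e).
Qed.

Theorem mainTheorem1 (P : pctx) (V W : {fset var}) :
  open_ectx P V -> open_ectx P W -> V = W.
Proof. move=> h1 h2; exact: (uniq_aux _ _ h1 _ _ h2 erefl). Qed.
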